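(* Let $\gamma=(q_i)_{i=0,\dots,r}$ be a finite sequence of modes such that $D_{q_i}\cap D_{q_{i+1}}\neq\emptyset$ for all $i$, let $\Omega_\gamma=\bigcup_{i=0}^rD_{q_i}$, and let $\mathcal{T}_f\subset D_{q_0}$. Define targets recursively by $\tau_0=\mathcal{T}_f$ and $\tau_{i+1}=\mathcal{C}_{\mathcal{H}}(\tau_i,D_{q_i})\cap G_{(q_i,q_{i+1})}$ for $i=0,\dots,r-1$, where $G_{(q_i,q_{i+1})}=\partial D_{q_i}\cap\partial D_{q_{i+1}}$, and set $$\underline{\mathcal{C}}_{\mathcal{H}}(\Omega_\gamma)=\mathcal{C}_{\mathcal{H}}(\tau_0,D_{q_0})\cup\mathcal{C}_{\mathcal{H}}(\tau_1,D_{q_1})\cup\dots\cup\mathcal{C}_{\mathcal{H}}(\tau_r,D_{q_r}).$$ Then $\underline{\mathcal{C}}_{\mathcal{H}}(\Omega_\gamma)\subset\mathcal{C}_{\mathcal{H}}(\mathcal{T}_f,\Omega_\gamma)$.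
   Context: Let $\mathbb{U}_m\subset\mathbb{R}^m$ be a compact convex polytope and $f_h:\mathbb{R}^n\times\mathbb{U}_m\to\mathbb{R}^n$ the continuous piecewise affine vector field of the hybrid model (affine on each simplex of a simplicial mesh of $\mathbb{R}^n\times\mathbb{U}_m$ whose projections onto $\mathbb{R}^n$ form a simplicial mesh $(D_q)_{q\in\mathcal{Q}}$ of $\mathbb{R}^n$; the $D_q$ are the cells of modes $q$). For $\mathcal{T}\subset D\subset\mathbb{R}^n$, $\mathcal{C}_{\mathcal{H}}(\mathcal{T},D)$ is the set of $X_0\in D$ for which there exist a finite time $T>0$ and a measurable control $u:[0,T]\to\mathbb{U}_m$ such that the solution $X_h$ of $\dot X=f_h(X,u)$, $X(0)=X_0$ satisfies $X_h(T)\in\mathcal{T}$ and $X_h(t)\in D$ for all $t\in[0,T]$. *)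

(* Defs.v *)
From HB Require Import structures.
From mathcomp Require Import all_boot all_order all_algebra.
From mathcomp Require Import all_classical all_reals all_analysis.
Set Implicit Arguments. Unset Strict Implicit. Unset Printing Implicit Defensive.
Import Order.TTheory GRing.Theory Num.Theory.
Import numFieldNormedType.Exports.
Local Open Scope classical_set_scope.
Local Open Scope ring_scope.

Section Hybrid.
Variable R : realType.

Definition conv_hull (k : nat) (S : seq 'rV[R]_k) : set 'rV[R]_k :=
  [set x | exists w : 'I_(size S) -> R,
     (forall i, 0 <= w i) /\ \sum_(i < size S) w i = 1 /\
     x = \sum_(i < size S) w i *: S`_i].

Definition aff_indep (k : nat) (S : seq 'rV[R]_k) : Prop :=
  forall w : 'I_(size S) -> R,
    \sum_(i < size S) w i = 0 -> \sum_(i < size S) w i *: S`_i = 0 ->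
    forall i, w i = 0.

Definition simplex_vertices (k : nat) (A : set 'rV[R]_k) (S : seq 'rV[R]_k) : Prop :=
  size S = k.+1 /\ aff_indep S /\ A = conv_hull S.

(* Faces of the simplex with vertex list S (the empty face included). *)
Definition is_face (k : nat) (S : seq 'rV[R]_k) (B : set 'rV[R]_k) : Prop :=
  exists msk : bitseq, B = conv_hull (mask msk S).

Definition simplicial_mesh (k : nat) (J : Type) (P : J -> set 'rV[R]_k)
    (E : set 'rV[R]_k) : Prop :=
  (exists V : J -> seq 'rV[R]_k,
     (forall j, simplex_vertices (P j) (V j)) /\
     (forall j j', j <> j' ->
        is_face (V j) (P j `&` P j') /\ is_face (V j') (P j `&` P j'))) /\
  \bigcup_(j in setT) P j = E /\
  (forall x : 'rV[R]_k, finite_set [set j | P j `&` ball x 1 !=set0]).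

Definition hybrid_model (n m : nat) (U : set 'rV[R]_m)
    (f : 'rV[R]_n -> 'rV[R]_m -> 'rV[R]_n) (Q : Type) (D : Q -> set 'rV[R]_n)
    : Prop :=
  (exists S : seq 'rV[R]_m, U = conv_hull S) /\ compact U /\
  {within [set z : 'rV[R]_(n + m) | U (rsubmx z)],
     continuous (fun z : 'rV[R]_(n + m) => f (lsubmx z) (rsubmx z))} /\
  simplicial_mesh D setT /\
  (exists (J : Type) (P : J -> set 'rV[R]_(n + m)),
     simplicial_mesh P [set z | U (rsubmx z)] /\
     (forall j, exists q, (fun z : 'rV[R]_(n + m) => lsubmx z) @` P j = D q) /\
     (forall j, exists (A : 'M[R]_(n + m, n)) (b : 'rV[R]_n),
        forall z, P j z -> f (lsubmx z) (rsubmx z) = z *m A + b)).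

(* Caratheodory solution on [0,T] of dX/dt = f(X,u), X(0) = X0. *)
Definition is_solution (n m : nat) (f : 'rV[R]_n -> 'rV[R]_m -> 'rV[R]_n)
    (u : R -> 'rV[R]_m) (X0 : 'rV[R]_n) (T : R) (X : R -> 'rV[R]_n) : Prop :=
  forall i : 'I_n,
    (lebesgue_measure).-integrable [set` `[0, T]]
       (fun s => (f (X s) (u s) 0 i)%:E) /\
    forall t, [set` `[0, T]] t ->
      (X t 0 i)%:E = adde (X0 0 i)%:E
        (\int[lebesgue_measure]_(s in [set` `[0, t]]) (f (X s) (u s) 0 i)%:E).

Definition ctrl_set (n m : nat) (U : set 'rV[R]_m)
    (f : 'rV[R]_n -> 'rV[R]_m -> 'rV[R]_n) (Tg Dom : set 'rV[R]_n)
    : set 'rV[R]_n :=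
  [set X0 | Dom X0 /\ exists T : R, 0 < T /\
     exists u : R -> 'rV[R]_m,
       (forall j : 'I_m, measurable_fun [set` `[0, T]] (fun t => u t 0 j)) /\
       (forall t, [set` `[0, T]] t -> U (u t)) /\
       exists X : R -> 'rV[R]_n,
         is_solution f u X0 T X /\ Tg (X T) /\
         (forall t, [set` `[0, T]] t -> Dom (X t))].

Definition bdry (n : nat) (A : set 'rV[R]_n) : set 'rV[R]_n :=
  closure A `\` interior A.

Definition guard (n : nat) (Q : Type) (D : Q -> set 'rV[R]_n) (q q' : Q) :=
  bdry (D q) `&` bdry (D q').

Fixpoint tau (n m : nat) (U : set 'rV[R]_m)
    (f : 'rV[R]_n -> 'rV[R]_m -> 'rV[R]_n) (Q : Type) (D : Q -> set 'rV[R]_n)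
    (gam : nat -> Q) (Tf : set 'rV[R]_n) (i : nat) : set 'rV[R]_n :=
  match i with
  | 0 => Tf
  | i'.+1 => ctrl_set U f (tau U f D gam Tf i') (D (gam i'))
               `&` guard D (gam i') (gam i)
  end.

End Hybrid.

(* Main.v *)
Require Import Defs.
From HB Require Import structures.
From mathcomp Require Import all_boot all_order all_algebra.
From mathcomp Require Import all_classical all_reals all_analysis.
From mathcomp Require Import measurable_realfun ring lra.
Import Order.TTheory GRing.Theory Num.Theory.
Import numFieldNormedType.Exports.
Local Open Scope classical_set_scope.
Local Open Scope ring_scope.


Local Notation mu := (@lebesgue_measure _).
Lemma pf_shift (R : realType) (c : R) (A : set R) : measurable A -> mu ((fun x => x + c) @^-1` A) = mu A.
Proof.
move=> mA.
have mphi : measurable_fun [set: measurableTypeR R] ((fun x : R => x + c) : measurableTypeR R -> measurableTypeR R).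
  by apply: measurable_funD => //.
apply/esym; apply: (@lebesgue_measure_unique R (measure_function_pushforward__canonical__measure_function_Measure mu mphi)) => //.
move=> _ [[a b] _ <-] /=.
rewrite /pushforward.
have -> : (fun x : R => x + c) @^-1` `]a, b]%classic = `](a - c), (b - c)]%classic.
  apply/seteqP; split => x /=; rewrite !in_itv /=.
  by move=> /andP[h1 h2]; apply/andP; split; lra.
  by move=> /andP[h1 h2]; apply/andP; split; lra.
rewrite !lebesgue_measure_itv /= !lte_fin ltrD2r.
case: ifP => // _; rewrite -!EFinD; congr (_%:E); lra.
Qed.

Local Open Scope ereal_scope.
Lemma int_shift (R : realType) (c : R) (D : set R) (h : R -> \bar R) : measurable D -> measurable_fun D h ->
  \int[mu]_(x in D) h x = \int[mu]_(x in (fun x => x + c)%R @^-1` D) h (x + c)%R.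
Proof.
move=> mD mh.
have mphi : measurable_fun [set: measurableTypeR R] ((fun x : R => x + c)%R : measurableTypeR R -> measurableTypeR R).
  by apply: measurable_funD.
rewrite (eq_measure_integral (measure_function_pushforward__canonical__measure_function_Measure mu mphi)); last first.
  by move=> A mA _; rewrite /= /pushforward pf_shift.
rewrite integralE [RHS]integralE.
rewrite (ge0_integral_pushforward mphi) //; last exact: measurable_funepos.
rewrite (ge0_integral_pushforward mphi) //; last exact: measurable_funeneg.
by rewrite -funepos_comp -funeneg_comp.
Qed.

Lemma mshift (R : realType) (c : R) : measurable_fun [set: measurableTypeR R] ((fun x : R => x + c)%R : measurableTypeR R -> measurableTypeR R).
Proof. by apply: measurable_funD. Qed.

Lemma mpre_shift (R : realType) (c : R) (D : set (measurableTypeR R)) : measurable D -> measurable ((fun x : measurableTypeR R => x + c)%R @^-1` D).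
Proof. by move=> mD; rewrite -[X in measurable X]setTI; apply: (@mshift _ c). Qed.

Lemma integrable_shift (R : realType) (c : R) (D : set R) (h : R -> \bar R) : measurable D ->
  mu.-integrable D h -> mu.-integrable ((fun x => x + c)%R @^-1` D) (fun x => h (x + c)%R).
Proof.
move=> mD /integrableP [mh hi]; apply/integrableP; split.
  apply: (measurable_comp mD) => //.
    by move=> _ [x Dx <-].
  exact: measurable_funS (@mshift _ c).
rewrite -(@int_shift _ c D (fun x => `|h x|)) //.
exact: measurableT_comp.
Qed.
Local Close Scope ereal_scope.

Lemma integrable_setU2 (R : realType) (A B : set R) (g : R -> \bar R) :
  measurable A -> measurable B -> [disjoint A & B] ->
  mu.-integrable A g -> mu.-integrable B g -> mu.-integrable (A `|` B) g.
Proof.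
move=> mA mB AB /integrableP [mgA iA] /integrableP [mgB iB].
have mg : measurable_fun (A `|` B) g by apply/measurable_funU.
apply/integrableP; split => //.
rewrite ge0_integral_setU //; first exact: lte_add_pinfty.
exact: measurableT_comp.
Qed.

Lemma itv_split (R : realType) (a b c : R) : (a <= b)%R -> (b <= c)%R ->
  [set` `[a, c]] = [set` `[a, b]] `|` [set` `]b, c]].
Proof.
move=> ab bc; apply/seteqP; split => x /=; rewrite !in_itv /=.
  move=> /andP[h1 h2]; case: (lerP x b) => hb.
    by left; apply/andP; split.
  by right; apply/andP; split.
case=> /andP[h1 h2]; apply/andP; split; lra.
Qed.

Lemma itv_disj (R : realType) (a b c : R) :
  [disjoint [set` `[a, b]] & [set` `]b, c]]].
Proof.
apply/disj_setPS => x [] /=; rewrite !in_itv /= => /andP[h1 h2] /andP[h3 h4].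
lra.
Qed.

Lemma ctrl_mono (R : realType) (n m : nat) (U : set 'rV[R]_m)
    (f : 'rV[R]_n -> 'rV[R]_m -> 'rV[R]_n) (Tg Dom E : set 'rV[R]_n) :
  Dom `<=` E -> ctrl_set U f Tg Dom `<=` ctrl_set U f Tg E.
Proof.
move=> DE X0 [D0 [T [Tp [u [mu' [Uu [X [sol [TX DX]]]]]]]]].
split; first exact: DE.
exists T; split => //; exists u; split => //; split => //.
exists X; split => //; split => // t ht; exact/DE/DX.
Qed.

Lemma ctrl_concat (R : realType) (n m : nat) (U : set 'rV[R]_m)
    (f : 'rV[R]_n -> 'rV[R]_m -> 'rV[R]_n) (A Tg Dom E : set 'rV[R]_n) :
  Dom `<=` E -> A `<=` ctrl_set U f Tg E ->
  ctrl_set U f A Dom `<=` ctrl_set U f Tg E.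
Proof.
move=> DE AC X0 [D0 [T1 [T1p [u1 [mu1 [Uu1 [X1 [sol1 [AX1 DX1]]]]]]]]].
have [_ [T2 [T2p [u2 [mu2 [Uu2 [X2 [sol2 [TX2 EX2]]]]]]]]] := AC _ AX1.
split; first exact: DE.
have T12 : (0 < T1 + T2)%R by lra.
exists (T1 + T2)%R; split => //.
pose u t := if (t <= T1)%R then u1 t else u2 (t - T1)%R.
have uL t : (t <= T1)%R -> u t = u1 t by rewrite /u => ->.
have uR t : (T1 < t)%R -> u t = u2 (t - T1)%R by rewrite /u leNgt => ->.
exists u; split.
  move=> j; rewrite (@itv_split _ 0 T1 (T1 + T2)%R); [|lra|lra].
  apply/measurable_funU => //; split.
    apply: eq_measurable_fun (mu1 j) => t; rewrite inE /= in_itv /= => /andP[_ ht].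
    by rewrite uL.
  have EQ : {in [set` `]T1, (T1 + T2)%R]], (fun t => u2 (t - T1)%R 0 j) =1 (fun t => u t 0 j)}.
    move=> t; rewrite inE /= in_itv /= => /andP[ht _].
    by rewrite uR.
  have sub : (fun t : R => t - T1) @` [set` `]T1, (T1 + T2)%R]] `<=` [set` `[0%R, T2]].
    move=> _ [t + <-]; rewrite /= !in_itv /= => /andP[h1 h2].
    apply/andP; split; lra.
  have mg : measurable_fun [set` `]T1, (T1 + T2)%R]] (fun t : R => t - T1).
    exact: measurable_funS (@mshift _ (- T1)%R).
  have M : measurable_fun [set` `]T1, (T1 + T2)%R]] (fun t => u2 (t - T1)%R 0 j).
    exact: (measurable_comp _ sub (mu2 j) mg).
  exact: eq_measurable_fun EQ M.
split.
  move=> t; rewrite /= in_itv /= => /andP[h1 h2]; case: (lerP t T1) => ht.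
    by rewrite uL //; apply: Uu1; rewrite /= in_itv /= h1 ht.
  by rewrite uR //; apply: Uu2; rewrite /= in_itv /=; apply/andP; split; lra.
pose X t := if (t <= T1)%R then X1 t else X2 (t - T1)%R.
have XL t : (t <= T1)%R -> X t = X1 t by rewrite /X => ->.
have XR t : (T1 < t)%R -> X t = X2 (t - T1)%R by rewrite /X leNgt => ->.
exists X; split; last split.
- move=> i; have [int1 eq1] := sol1 i; have [int2 eq2] := sol2 i.
  pose g s := (f (X s) (u s) 0 i)%:E.
  pose g1 s := (f (X1 s) (u1 s) 0 i)%:E.
  pose g2 s := (f (X2 s) (u2 s) 0 i)%:E.
  have gL s : s <= T1 -> g s = g1 s by move=> hs; rewrite /g XL // uL.
  have gR s : T1 < s -> g s = g2 (s - T1) by move=> hs; rewrite /g XR // uR.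
  have subp : [set` `]T1, (T1 + T2)]] `<=` (fun x => x + - T1) @^-1` [set` `[0, T2]].
    by move=> x; rewrite /= !in_itv /= => /andP[h1 h2]; apply/andP; split; lra.
  have int2s : mu.-integrable [set` `]T1, (T1 + T2)]] (fun x => g2 (x + - T1)).
    have h := @integrable_shift _ (- T1) _ _ (measurable_itv _) int2.
    have h2 := (integrableS (@mpre_shift _ (- T1) _ (measurable_itv _)) (measurable_itv _) subp h).
    exact: h2.
  have intR : mu.-integrable [set` `]T1, (T1 + T2)]] g.
    apply: (eq_integrable _ _ _ _ int2s) => // s; rewrite inE /= in_itv /= => /andP[h1 _].
    by rewrite gR.
  have intL : mu.-integrable [set` `[0%R, T1]] g.
    apply: (eq_integrable _ _ _ _ int1) => // s; rewrite inE /= in_itv /= => /andP[_ h1].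
    by rewrite gL.
  have intT : mu.-integrable [set` `[0, (T1 + T2)]] g.
    rewrite (@itv_split _ 0 T1 (T1 + T2)); [|lra|lra].
    apply: integrable_setU2 => //; exact: itv_disj.
  split => // t; rewrite /= in_itv /= => /andP[t0 tT].
  case: (lerP t T1) => ht.
    rewrite XL // (eq1 t); last by rewrite /= in_itv /= t0 ht.
    congr (_ + _)%E; apply: eq_integral => s; rewrite inE /= in_itv /= => /andP[_ hs].
    by rewrite -/(g s) gL //; lra.
  rewrite XR // (eq2 (t - T1)); last by rewrite /= in_itv /=; apply/andP; split; lra.
  rewrite (eq1 T1); last by rewrite /= in_itv /=; apply/andP; split; lra.
  have mgt : measurable_fun [set` `[0, t]] g.
    have /integrableP[+ _] := intT; apply: measurable_funS => //.
    by move=> x; rewrite /= !in_itv /= => /andP[h1 h2]; apply/andP; split; lra.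
  have mgU : measurable_fun ([set` `[0%R, T1]] `|` [set` `]T1, t]]) g.
    by rewrite -(@itv_split _ 0 T1 t) //; lra.
  rewrite (@itv_split _ 0 T1 t); [|lra|lra].
  rewrite integral_setU //; last exact: itv_disj.
  have E1 : (\int[mu]_(x in [set` `[0%R, T1]]) (f (X x) (u x) 0 i)%:E
      = \int[mu]_(x in [set` `[0%R, T1]]) (f (X1 x) (u1 x) 0 i)%:E)%E.
    by apply: eq_integral => s; rewrite inE /= in_itv /= => /andP[_ hs]; rewrite -/(g s) gL.
  have E2 : (\int[mu]_(x in [set` `]T1, t]]) (f (X x) (u x) 0 i)%:E
      = \int[mu]_(x in [set` `[0%R, (t - T1)%R]]) (f (X2 x) (u2 x) 0 i)%:E)%E.
    transitivity (\int[mu]_(x in [set` `]T1, t]]) g2 (x - T1)%R)%E.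
      by apply: eq_integral => s; rewrite inE /= in_itv /= => /andP[hs _]; rewrite -/(g s) gR.
    have m2s : measurable_fun [set` `]T1, t]] (fun x => g2 (x - T1)%R).
      have /integrableP[+ _] := int2s; apply: measurable_funS => //.
      by move=> x; rewrite /= !in_itv /= => /andP[h1 h2]; apply/andP; split; lra.
    rewrite integral_itv_obnd_cbnd //.
    have -> : [set` `[T1, t]] = (fun x => x + - T1)%R @^-1` [set` `[0%R, (t - T1)%R]].
      by apply/seteqP; split => x; rewrite /= !in_itv /= => /andP[h1 h2]; apply/andP; split; lra.
    symmetry; apply: int_shift => //.
    have /integrableP[+ _] := int2; apply: measurable_funS => //.
    by move=> x; rewrite /= !in_itv /= => /andP[h1 h2]; apply/andP; split; lra.
  rewrite E1 E2; exact: (esym (addeA _ _ _)).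

- by rewrite XR ?(addrC T1 T2) ?addrK //; lra.
- move=> t; rewrite /= in_itv /= => /andP[h1 h2]; case: (lerP t T1) => ht.
    by rewrite XL //; apply/DE/DX1; rewrite /= in_itv /= h1 ht.
  by rewrite XR //; apply: EX2; rewrite /= in_itv /=; apply/andP; split; lra.
Qed.

Theorem proposition10 (R : realType) (n m : nat) (U : set 'rV[R]_m)
    (f : 'rV[R]_n -> 'rV[R]_m -> 'rV[R]_n) (Q : Type) (D : Q -> set 'rV[R]_n)
    (r : nat) (gam : nat -> Q) (Tf : set 'rV[R]_n) :
  hybrid_model U f D ->
  (forall i, (i < r)%N -> D (gam i) `&` D (gam i.+1) !=set0) ->
  Tf `<=` D (gam 0%N) ->
  \bigcup_(i in [set i : nat | (i <= r)%N])
      ctrl_set U f (tau U f D gam Tf i) (D (gam i))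
    `<=` ctrl_set U f Tf (\bigcup_(i in [set i : nat | (i <= r)%N]) D (gam i)).
Proof.
move=> _ _ _.
suff H : forall i, (i <= r)%N -> ctrl_set U f (tau U f D gam Tf i) (D (gam i))
    `<=` ctrl_set U f Tf (\bigcup_(i in [set i : nat | (i <= r)%N]) D (gam i)).
  by move=> X0 [i /= ir HX]; exact: (H i ir).
elim=> [|i IH] ir.
  by apply: ctrl_mono => x Dx; exists 0%N.
apply: ctrl_concat.
  by move=> x Dx; exists i.+1.
move=> x /= [hx _]; exact: (IH (ltnW ir)).
Qed.
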